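(* Let $(X,\rho)$ be a complete, separable metric space, let $\omega:[0,+\infty)\to[0,+\infty)$ be a continuous, concave, nonzero and nondecreasing function with $\omega(0)=0$, and let $\Theta=\{\theta_n\}_{n=1}^\infty$ be dense in $X$. Define $d_\Theta:\mathcal{C}_\omega(X)\times\mathcal{C}_\omega(X)\to\mathbb{R}$ by $d_\Theta(f,g)=\sum_{n=1}^\infty 2^{-n}\min\{1,\rho(f(\theta_n),g(\theta_n))\}$. Then $d_\Theta$ is a complete metric on $\mathcal{C}_\omega(X)$. Moreover, a sequence $(f_k)_{k=1}^\infty$ in $\mathcal{C}_\omega(X)$ converges to $f\in\mathcal{C}_\omega(X)$ with respect to $d_\Theta$ if and only if $f_k(x)\to f(x)$ for every $x\in X$ as $k\to\infty$.
   Context: For $f:X\to X$, the modulus of continuity is $\omega_f(s)=\sup\{\rho(f(x),f(y)): x,y\in X,\ \rho(x,y)\le s\}$ for $s\ge0$; $\mathcal{C}_\omega(X)$ is the set of all maps $f:X\to X$ with $\omega_f(s)\le\omega(s)$ for all $s\ge0$. *)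

(* Defs.v *)
From Stdlib Require Import Reals Lra.
From Coquelicot Require Import Coquelicot.
Open Scope R_scope.

Definition is_metric {X : Type} (rho : X -> X -> R) : Prop :=
  (forall x y, 0 <= rho x y) /\
  (forall x y, rho x y = 0 <-> x = y) /\
  (forall x y, rho x y = rho y x) /\
  (forall x y z, rho x z <= rho x y + rho y z).

Definition is_metric_on {T : Type} (S : T -> Prop) (m : T -> T -> R) : Prop :=
  (forall x y, S x -> S y -> 0 <= m x y) /\
  (forall x y, S x -> S y -> (m x y = 0 <-> x = y)) /\
  (forall x y, S x -> S y -> m x y = m y x) /\
  (forall x y z, S x -> S y -> S z -> m x z <= m x y + m y z).

Definition cauchy_seq {T : Type} (m : T -> T -> R) (u : nat -> T) : Prop :=
  forall eps, 0 < eps -> exists N, forall p q, (N <= p)%nat -> (N <= q)%nat ->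
    m (u p) (u q) < eps.

Definition converges_to {T : Type} (m : T -> T -> R) (u : nat -> T) (l : T) : Prop :=
  forall eps, 0 < eps -> exists N, forall p, (N <= p)%nat -> m (u p) l < eps.

Definition complete_on {T : Type} (S : T -> Prop) (m : T -> T -> R) : Prop :=
  forall u : nat -> T, (forall k, S (u k)) -> cauchy_seq m u ->
    exists l, S l /\ converges_to m u l.

Definition complete_space {X : Type} (rho : X -> X -> R) : Prop :=
  complete_on (fun _ : X => True) rho.

Definition dense_seq {X : Type} (rho : X -> X -> R) (theta : nat -> X) : Prop :=
  forall x eps, 0 < eps -> exists n, rho x (theta n) < eps.

Definition separable {X : Type} (rho : X -> X -> R) : Prop :=
  exists theta : nat -> X, dense_seq rho theta.

(* hypotheses on omega : [0,+oo) -> [0,+oo) (represented as R -> R) *)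
Definition admissible_modulus (omega : R -> R) : Prop :=
  (forall s, 0 <= s -> 0 <= omega s) /\
  (forall s, 0 <= s -> forall eps, 0 < eps -> exists delta, 0 < delta /\
     forall t, 0 <= t -> Rabs (t - s) < delta -> Rabs (omega t - omega s) < eps) /\
  (forall s t l, 0 <= s -> 0 <= t -> 0 <= l <= 1 ->
     l * omega s + (1 - l) * omega t <= omega (l * s + (1 - l) * t)) /\
  (exists s, 0 <= s /\ omega s <> 0) /\
  (forall s t, 0 <= s -> s <= t -> omega s <= omega t) /\
  omega 0 = 0.

Definition modulus_of_continuity {X : Type} (rho : X -> X -> R) (f : X -> X) (s : R)
  : Rbar :=
  Lub_Rbar (fun r => exists x y, rho x y <= s /\ r = rho (f x) (f y)).

Definition C_omega {X : Type} (rho : X -> X -> R) (omega : R -> R) (f : X -> X) : Prop :=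
  forall s, 0 <= s -> Rbar_le (modulus_of_continuity rho f s) (Finite (omega s)).

(* d_Theta(f,g) = sum_{n>=1} 2^{-n} min{1, rho(f theta_n, g theta_n)};
   theta is indexed from 0 here, theta n playing the role of theta_{n+1}. *)
Definition d_Theta {X : Type} (rho : X -> X -> R) (theta : nat -> X) (f g : X -> X) : R :=
  Series (fun n => (/ 2) ^ (S n) * Rmin 1 (rho (f (theta n)) (g (theta n)))).

(* Main.v *)
Require Import Defs.
From Stdlib Require Import Reals Lra Lia ClassicalEpsilon FunctionalExtensionality.
From Coquelicot Require Import Coquelicot.
Open Scope R_scope.

Lemma geo_half : is_series (fun n => (/2)^(S n)) 1.
Proof.
  assert (Habs : Rabs (/2) < 1) by (rewrite Rabs_pos_eq; lra).
  assert (H := is_series_geom (/2) Habs).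
  assert (H2 := is_series_scal_l (/2) _ _ H).
  replace 1 with (scal (/2) (/(1 - /2))).
  - apply is_series_ext with (2 := H2). intros n. reflexivity.
  - change (/2 * /(1 - /2) = 1). field.
Qed.

Definition bnd (t : nat -> R) := forall n, 0 <= t n <= (/2)^(S n).

Lemma ex_bnd t : bnd t -> ex_series t.
Proof. intros H. apply (ex_series_le t (fun n => (/2)^(S n))).
  - intros n. change (Rabs (t n) <= (/2)^(S n)). rewrite Rabs_pos_eq; apply H.
  - exists 1; apply geo_half. Qed.

Lemma Series_zero : Series (fun _ => 0) = 0.
Proof. transitivity (Series (fun n => 0 * (fun _ => 0) n)).
  apply Series_ext; intros; ring. rewrite Series_scal_l. ring. Qed.

Lemma Series_nn t : bnd t -> 0 <= Series t.
Proof. intros H. rewrite <- Series_zero. apply Series_le.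
  intros n; split; [lra| apply H]. apply ex_bnd; exact H. Qed.

Lemma pow_half n : 0 < (/2)^n <= 1.
Proof. induction n; simpl; lra. Qed.

Lemma bnd_shift t m : bnd t -> bnd (fun k => t (m + k)%nat).
Proof. intros H n. split. apply H. destruct (H (m+n)%nat) as [_ H2].
  eapply Rle_trans. exact H2. replace (S (m+n)) with (m + S n)%nat by lia.
  rewrite pow_add. destruct (pow_half m). destruct (pow_half (S n)). nra. Qed.

Lemma term_le t n : bnd t -> t n <= Series t.
Proof. intros H. rewrite (Series_incr_n t (S n)). 2: lia. 2: apply ex_bnd, H.
  simpl pred. assert (0 <= Series (fun k => t (S n + k)%nat)) by (apply Series_nn, bnd_shift, H).
  destruct n. cbn [sum_f_R0]. lra. cbn [sum_f_R0].
  assert (0 <= sum_f_R0 t n). { apply cond_pos_sum. intros; apply H. } lra. Qed.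

Lemma tail_le t N : bnd t -> Series t <= sum_f_R0 t N + (/2)^(S N).
Proof. intros H. rewrite (Series_incr_n t (S N)). 2: lia. 2: apply ex_bnd, H.
  simpl pred. apply Rplus_le_compat_l.
  replace ((/2)^(S N)) with ((/2)^(S N) * Series (fun n => (/2)^(S n))).
  2: { rewrite (is_series_unique _ _ geo_half). ring. }
  rewrite <- Series_scal_l. apply Series_le.
  - intros n. destruct (H (S N + n)%nat) as [H1 H2]. split. destruct (pow_half (S N)). destruct (pow_half (S n)). nra.
    eapply Rle_trans. exact H2. rewrite <- pow_add. right. f_equal. lia.
  - exists ((/2)^(S N) * 1). apply (is_series_scal_l ((/2)^(S N)) _ _ geo_half).
Qed.

Definition tm {X : Type} (rho : X -> X -> R) (theta : nat -> X) (f g : X -> X) (n : nat) : R :=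
  (/ 2) ^ (S n) * Rmin 1 (rho (f (theta n)) (g (theta n))).

Lemma Rmin_bnd r : 0 <= r -> 0 <= Rmin 1 r <= 1.
Proof. intros; unfold Rmin; destruct Rle_dec; lra. Qed.

Lemma Rmin_le_r r : Rmin 1 r <= r \/ Rmin 1 r = 1.
Proof. unfold Rmin; destruct Rle_dec; lra. Qed.

Lemma bnd_tm {X} (rho : X -> X -> R) theta f g : is_metric rho -> bnd (tm rho theta f g).
Proof. intros (Hnn & _) n. unfold tm. destruct (Rmin_bnd (rho (f (theta n)) (g (theta n)))) as [H1 H2].
  apply Hnn. destruct (pow_half (S n)). split; nra. Qed.

Lemma Comega_le {X} (rho : X -> X -> R) omega f : is_metric rho -> C_omega rho omega f ->
  forall x y, rho (f x) (f y) <= omega (rho x y).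
Proof. intros (Hnn & _) H x y.
  specialize (H (rho x y) (Hnn x y)).
  destruct (Lub_Rbar_correct (fun r => exists x0 y0, rho x0 y0 <= rho x y /\ r = rho (f x0) (f y0))) as [Hub _].
  assert (H0 : Rbar_le (rho (f x) (f y)) (Lub_Rbar (fun r => exists x0 y0, rho x0 y0 <= rho x y /\ r = rho (f x0) (f y0)))).
  { apply Hub. exists x, y. split; [lra|reflexivity]. }
  exact (Rbar_le_trans _ _ _ H0 H). Qed.

Lemma le_Comega {X} (rho : X -> X -> R) omega f : is_metric rho -> admissible_modulus omega ->
  (forall x y, rho (f x) (f y) <= omega (rho x y)) -> C_omega rho omega f.
Proof. intros (Hnn & _) (_ & _ & _ & _ & Hmono & _) H s Hs. unfold modulus_of_continuity.
  destruct (Lub_Rbar_correct (fun r => exists x y, rho x y <= s /\ r = rho (f x) (f y))) as [_ Hl].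
  apply Hl. intros r [x [y [Hxy ->]]]. simpl. eapply Rle_trans; [apply H|].
  apply Hmono; [apply Hnn|exact Hxy]. Qed.

Lemma omega_small omega : admissible_modulus omega -> forall eps, 0 < eps ->
  exists delta, 0 < delta /\ forall t, 0 <= t -> t < delta -> omega t < eps.
Proof. intros (_ & Hc & _ & _ & _ & H0) eps He.
  destruct (Hc 0 (Rle_refl 0) eps He) as [d [Hd Ht]]. exists d. split; auto.
  intros t Ht0 Htd. specialize (Ht t Ht0). rewrite H0, !Rminus_0_r in Ht.
  rewrite Rabs_pos_eq in Ht by lra. specialize (Ht Htd). eapply Rle_lt_trans; [apply Rle_abs|exact Ht]. Qed.

Lemma finite_max (P : nat -> nat -> Prop) : (forall n, exists K, forall k, (K <= k)%nat -> P n k) ->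
  forall N, exists K, forall n k, (n <= N)%nat -> (K <= k)%nat -> P n k.
Proof. intros H N. induction N.
  - destruct (H 0%nat) as [K HK]; exists K; intros n k Hn Hk; replace n with 0%nat by lia; auto.
  - destruct IHN as [K1 H1]; destruct (H (S N)) as [K2 H2]; exists (max K1 K2); intros n k Hn Hk.
    destruct (Nat.eq_dec n (S N)). subst; apply H2; lia. apply H1; lia. Qed.

Lemma small_d {X} (rho : X -> X -> R) theta : is_metric rho -> forall n eps, 0 < eps ->
  exists c, 0 < c /\ forall f g, d_Theta rho theta f g < c -> rho (f (theta n)) (g (theta n)) < eps.
Proof. intros Hm n eps He. destruct (pow_half (S n)).
  exists ((/2)^(S n) * Rmin 1 eps). split.
  { unfold Rmin; destruct Rle_dec; nra. }
  intros f g Hd. destruct (Rlt_or_le (rho (f (theta n)) (g (theta n))) eps) as [|Hge]; auto.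
  exfalso. assert (Hmin : Rmin 1 eps <= Rmin 1 (rho (f (theta n)) (g (theta n)))).
  { unfold Rmin; destruct Rle_dec; destruct Rle_dec; lra. }
  assert (Ht := term_le (tm rho theta f g) n (bnd_tm rho theta f g Hm)).
  unfold d_Theta in Hd. change (Series (tm rho theta f g) < (/2)^(S n) * Rmin 1 eps) in Hd.
  assert (tm rho theta f g n = (/2)^(S n) * Rmin 1 (rho (f (theta n)) (g (theta n)))) by reflexivity.
  assert ((/2)^(S n) * Rmin 1 eps <= (/2)^(S n) * Rmin 1 (rho (f (theta n)) (g (theta n)))).
  { apply Rmult_le_compat_l; lra. }
  lra. Qed.

Lemma Cpt {X} (rho : X -> X -> R) theta (fk : nat -> X -> X) f : is_metric rho ->
  (forall n, converges_to rho (fun k => fk k (theta n)) (f (theta n))) ->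
  converges_to (d_Theta rho theta) fk f.
Proof. intros Hm H eps He.
  assert (Habs : Rabs (/2) < 1) by (rewrite Rabs_pos_eq; lra).
  destruct (pow_lt_1_zero (/2) Habs (eps/2)) as [N HN]; [lra|].
  assert (HSN : (/2)^(S N) < eps/2).
  { specialize (HN (S N) ltac:(lia)). rewrite Rabs_pos_eq in HN. exact HN. left; apply pow_half. }
  assert (HINR : 0 < INR (S N)) by (apply lt_0_INR; lia).
  set (delta := eps / (2 * INR (S N))).
  assert (Hdel : 0 < delta) by (unfold delta; apply Rdiv_lt_0_compat; lra).
  destruct (finite_max (fun n k => rho (fk k (theta n)) (f (theta n)) < delta)
    (fun n => H n delta Hdel) N) as [K HK].
  exists K. intros p Hp.
  unfold d_Theta. change (Series (tm rho theta (fk p) f) < eps).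
  eapply Rle_lt_trans. apply (tail_le _ N), bnd_tm, Hm.
  assert (sum_f_R0 (tm rho theta (fk p) f) N <= sum_f_R0 (fun _ => delta) N).
  { apply sum_Rle. intros n Hn. specialize (HK n p Hn Hp). unfold tm.
    destruct Hm as (Hnn & _). destruct (Rmin_bnd _ (Hnn (fk p (theta n)) (f (theta n)))).
    destruct (pow_half (S n)). assert (Rmin 1 (rho (fk p (theta n)) (f (theta n))) <= rho (fk p (theta n)) (f (theta n))) by apply Rmin_r.
    simpl in HK. nra. }
  rewrite sum_cte in H0. unfold delta in H0.
  replace (eps / (2 * INR (S N)) * INR (S N)) with (eps/2) in H0.
  lra. field. apply Rgt_not_eq. exact HINR. Qed.

Lemma Bpt {X} (rho : X -> X -> R) omega theta (fk : nat -> X -> X) f : is_metric rho ->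
  admissible_modulus omega -> dense_seq rho theta ->
  (forall k x y, rho (fk k x) (fk k y) <= omega (rho x y)) ->
  (forall x y, rho (f x) (f y) <= omega (rho x y)) ->
  (forall n, converges_to rho (fun k => fk k (theta n)) (f (theta n))) ->
  forall x, converges_to rho (fun k => fk k x) (f x).
Proof. intros Hm Ho Hd Hk Hf H x eps He.
  destruct Hm as (Hnn & _ & Hsym & Htri).
  destruct (omega_small omega Ho (eps/3)) as [d [Hd0 Hdd]]; [lra|].
  destruct (Hd x d Hd0) as [n Hn].
  destruct (H n (eps/3)) as [N HN]; [lra|].
  exists N. intros p Hp. specialize (HN p Hp).
  assert (H1 := Hk p x (theta n)). assert (H2 := Hf (theta n) x). rewrite (Hsym (theta n) x) in H2. simpl in HN.
  assert (H3 := Hdd _ (Hnn x (theta n)) Hn).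
  assert (T1 := Htri (fk p x) (fk p (theta n)) (f x)).
  assert (T2 := Htri (fk p (theta n)) (f (theta n)) (f x)). lra. Qed.

Lemma Acauchy {X} (rho : X -> X -> R) omega theta (u : nat -> X -> X) : is_metric rho ->
  admissible_modulus omega -> dense_seq rho theta ->
  (forall k x y, rho (u k x) (u k y) <= omega (rho x y)) ->
  (forall n, cauchy_seq rho (fun k => u k (theta n))) ->
  forall x, cauchy_seq rho (fun k => u k x).
Proof. intros Hm Ho Hd Hk H x eps He.
  destruct Hm as (Hnn & _ & Hsym & Htri).
  destruct (omega_small omega Ho (eps/3)) as [d [Hd0 Hdd]]; [lra|].
  destruct (Hd x d Hd0) as [n Hn].
  destruct (H n (eps/3)) as [N HN]; [lra|].
  exists N. intros p q Hp Hq. specialize (HN p q Hp Hq). simpl in HN.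
  assert (H1 := Hk p x (theta n)). assert (H2 := Hk q (theta n) x). rewrite (Hsym (theta n) x) in H2.
  assert (H3 := Hdd _ (Hnn x (theta n)) Hn).
  assert (T1 := Htri (u p x) (u p (theta n)) (u q x)).
  assert (T2 := Htri (u p (theta n)) (u q (theta n)) (u q x)). simpl. lra. Qed.

Lemma cauchy_theta {X} (rho : X -> X -> R) theta (u : nat -> X -> X) : is_metric rho ->
  cauchy_seq (d_Theta rho theta) u -> forall n, cauchy_seq rho (fun k => u k (theta n)).
Proof. intros Hm H n eps He. destruct (small_d rho theta Hm n eps He) as [c [Hc Hcd]].
  destruct (H c Hc) as [N HN]. exists N. intros p q Hp Hq. apply Hcd. apply HN; auto. Qed.

Lemma conv_theta {X} (rho : X -> X -> R) theta (u : nat -> X -> X) f : is_metric rho ->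
  converges_to (d_Theta rho theta) u f -> forall n, converges_to rho (fun k => u k (theta n)) (f (theta n)).
Proof. intros Hm H n eps He. destruct (small_d rho theta Hm n eps He) as [c [Hc Hcd]].
  destruct (H c Hc) as [N HN]. exists N. intros p Hp. apply Hcd. apply HN; auto. Qed.

Lemma Rmin_tri a b c : 0 <= b -> 0 <= c -> a <= b + c -> Rmin 1 a <= Rmin 1 b + Rmin 1 c.
Proof. intros. unfold Rmin; repeat destruct Rle_dec; lra. Qed.

Theorem proposition5p1 (X : Type) (rho : X -> X -> R) (omega : R -> R)
  (theta : nat -> X)
  (Hmetric : is_metric rho) (Hcomplete : complete_space rho) (Hsep : separable rho)
  (Homega : admissible_modulus omega) (Hdense : dense_seq rho theta) :
  is_metric_on (C_omega rho omega) (d_Theta rho theta) /\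
  complete_on (C_omega rho omega) (d_Theta rho theta) /\
  (forall (fk : nat -> X -> X) (f : X -> X),
     (forall k, C_omega rho omega (fk k)) -> C_omega rho omega f ->
     (converges_to (d_Theta rho theta) fk f <->
      forall x, converges_to rho (fun k => fk k x) (f x))).
Proof.
  pose proof Hmetric as (Hnn & Heq & Hsym & Htri).
  split; [|split].
  - split; [|split; [|split]].
    + intros f g _ _. apply Series_nn, bnd_tm, Hmetric.
    + intros f g Hf Hg. split.
      * intros H0.
        assert (Hth : forall n, f (theta n) = g (theta n)).
        { intros n. assert (Ht := term_le _ n (bnd_tm rho theta f g Hmetric)).
          assert (Ht0 := bnd_tm rho theta f g Hmetric n).
          unfold d_Theta in H0. change (Series (tm rho theta f g) = 0) in H0.
          rewrite H0 in Ht. unfold tm in Ht, Ht0. destruct (pow_half (S n)).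
          assert (Hz : Rmin 1 (rho (f (theta n)) (g (theta n))) = 0) by nra.
          apply Heq. destruct (Rmin_bnd _ (Hnn (f (theta n)) (g (theta n)))).
          revert Hz. unfold Rmin; destruct Rle_dec; lra. }
        apply functional_extensionality. intros x.
        assert (Hc := Bpt rho omega theta (fun _ => f) g Hmetric Homega Hdense
          (fun _ => Comega_le rho omega f Hmetric Hf) (Comega_le rho omega g Hmetric Hg)).
        assert (Hc2 : forall n, converges_to rho (fun _ : nat => f (theta n)) (g (theta n))).
        { intros n eps He. exists 0%nat. intros. rewrite Hth. rewrite (proj2 (Heq _ _) eq_refl). exact He. }
        specialize (Hc Hc2 x). apply Heq.
        destruct (Rle_lt_or_eq_dec 0 (rho (f x) (g x)) (Hnn _ _)) as [Hlt|]; auto.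
        destruct (Hc _ Hlt) as [N HN]. specialize (HN N (le_n N)). simpl in HN. lra.
      * intros <-. unfold d_Theta. rewrite <- Series_zero. apply Series_ext. intros n.
        rewrite (proj2 (Heq _ _) eq_refl). unfold Rmin; destruct Rle_dec; lra.
    + intros f g _ _. unfold d_Theta. apply Series_ext. intros n. rewrite Hsym. reflexivity.
    + intros f g h _ _ _. unfold d_Theta.
      change (Series (tm rho theta f h) <= Series (tm rho theta f g) + Series (tm rho theta g h)).
      rewrite <- Series_plus by (apply ex_bnd, bnd_tm, Hmetric).
      apply Series_le.
      * intros n. split. apply bnd_tm, Hmetric. unfold tm. rewrite <- Rmult_plus_distr_l.
        apply Rmult_le_compat_l. left; apply pow_half. apply Rmin_tri; auto.
      * apply (ex_series_plus (tm rho theta f g) (tm rho theta g h)); apply ex_bnd, bnd_tm, Hmetric.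
  - intros u Hu Hcau.
    assert (Hk : forall k x y, rho (u k x) (u k y) <= omega (rho x y)).
    { intros k; apply Comega_le; auto. }
    assert (Hpc := Acauchy rho omega theta u Hmetric Homega Hdense Hk (cauchy_theta rho theta u Hmetric Hcau)).
    assert (Hl : forall x, exists l, converges_to rho (fun k => u k x) l).
    { intros x. destruct (Hcomplete (fun k => u k x) (fun _ => I) (Hpc x)) as [l [_ Hl]]. exists l; exact Hl. }
    set (f := fun x => proj1_sig (constructive_indefinite_description _ (Hl x))).
    assert (Hf : forall x, converges_to rho (fun k => u k x) (f x)).
    { intros x. unfold f. destruct (constructive_indefinite_description _ (Hl x)). exact c. }
    assert (HfC : forall x y, rho (f x) (f y) <= omega (rho x y)).
    { intros x y. apply Rle_plus_epsilon. intros eps He.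
      destruct (Hf x (eps/2)) as [N1 H1]; [lra|]. destruct (Hf y (eps/2)) as [N2 H2]; [lra|].
      specialize (H1 (max N1 N2) ltac:(lia)). specialize (H2 (max N1 N2) ltac:(lia)). simpl in H1, H2.
      assert (T1 := Htri (f x) (u (max N1 N2) x) (f y)).
      assert (T2 := Htri (u (max N1 N2) x) (u (max N1 N2) y) (f y)).
      rewrite (Hsym (f x) (u (max N1 N2) x)) in T1. assert (Hk2 := Hk (max N1 N2) x y). lra. }
    exists f. split. apply le_Comega; auto.
    apply Cpt; [exact Hmetric| intros n; apply Hf].
  - intros fk f Hfk Hf. split.
    + intros H. apply (Bpt rho omega theta fk f Hmetric Homega Hdense).
      intros k; apply Comega_le; auto. apply Comega_le; auto.
      apply conv_theta; auto.
    + intros H. apply Cpt; auto.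
Qed.
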